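(* Let $X$ be a non-empty finite set and $\mathcal{P}=\{P_1,\ldots,P_n\}$ a partition of $X$ with $n\ge 2$ blocks, indexed so that $|P_i|\le|P_j|$ whenever $i<j$. Let $U\subseteq T(X,\mathcal{P})\setminus\Sigma(X,\mathcal{P})$ be such that $T(X,\mathcal{P})$ is generated (as a semigroup) by $\Sigma(X,\mathcal{P})\cup U$. Then for all distinct $i,j\in\{1,\ldots,n\}$ there exist $f\in U\cap\mathcal{A}$ and distinct $k,l\in\{1,\ldots,n\}$ such that $(k)\overline{f}=(l)\overline{f}$, $|P_i|=|P_k|$ and $|P_j|=|P_l|$.
   Context: Maps are written on the right and composed left to right. $T(X,\mathcal{P})$ is the semigroup of maps $f:X\to X$ such that each block of $\mathcal{P}$ is mapped into some block of $\mathcal{P}$; $\Sigma(X,\mathcal{P})$ is the set of $f\in T(X,\mathcal{P})$ whose image intersects every block of $\mathcal{P}$. For $f\in T(X,\mathcal{P})$, $\overline{f}:\{1,\ldots,n\}\to\{1,\ldots,n\}$ is defined by $(i)\overline{f}=j$ whenever $P_if\subseteq P_j$. $\mathcal{A}$ is the set of $f\in T(X,\mathcal{P})$ such that $f|_{P_i}$ is injective for every $i$ and $|\operatorname{im}(\overline{f})|=n-1$. *)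

(* Defs.v *)
From mathcomp Require Import all_boot.
Set Implicit Arguments. Unset Strict Implicit. Unset Printing Implicit Defensive.

(* A partition P = {P_0,...,P_{n-1}} of the finite set X (= finType T) with
   indexed blocks is encoded by a surjective block map blk : T -> 'I_n,
   P_i = blk^{-1}(i).  Maps are elements of {ffun T -> T}; x f is written f x. *)

Section Defs.
Variables (T : finType) (n : nat) (blk : T -> 'I_n).

Definition block (i : 'I_n) : {set T} := [set x | blk x == i].

Definition inTP (f : {ffun T -> T}) : bool :=
  [forall i : 'I_n, [exists j : 'I_n, [forall x in block i, f x \in block j]]].

Definition inSigma (f : {ffun T -> T}) : bool :=
  inTP f && [forall j : 'I_n, [exists x : T, f x \in block j]].

(* \bar f : (i) \bar f = j whenever P_i f ⊆ P_j (evaluated at a point of P_i;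
   blocks are non-empty, so this is well defined for f in T(X,P)). *)
Definition fbar (f : {ffun T -> T}) (i : 'I_n) : 'I_n :=
  if [pick x in block i] is Some x then blk (f x) else i.

Definition inA (f : {ffun T -> T}) : bool :=
  [&& inTP f,
      [forall i : 'I_n, [forall x in block i, [forall y in block i,
         (f x == f y) ==> (x == y)]]] &
      #|[set fbar f i | i : 'I_n]| == n.-1].

(* right-action composition: x (f g) = (x f) g *)
Definition rcomp (f g : {ffun T -> T}) : {ffun T -> T} := [ffun x => g (f x)].
End Defs.

Inductive sgen (T : finType) (S : pred {ffun T -> T}) : {ffun T -> T} -> Prop :=
  | sgen_base f : S f -> sgen S f
  | sgen_comp f g : sgen S f -> sgen S g -> sgen S (rcomp f g).

(* Main.v *)
Require Import Defs.
From mathcomp Require Import all_boot.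
Set Implicit Arguments. Unset Strict Implicit. Unset Printing Implicit Defensive.

Section Helpers.
Variables (T : finType) (n : nat) (blk : T -> 'I_n).
Hypothesis blk_surj : forall i : 'I_n, exists x : T, blk x = i.

Definition inj_blk (f : {ffun T -> T}) := forall x y, blk x = blk y -> f x = f y -> x = y.

Lemma fbarE f x : inTP blk f -> fbar blk f (blk x) = blk (f x).
Proof.
move=> /forallP /(_ (blk x)) /existsP [j /forallP Hj].
rewrite /fbar; case: pickP => [y Hy|/(_ x)]; last by rewrite inE eqxx.
have := Hj y; rewrite Hy /= inE => /eqP ->.
by have := Hj x; rewrite inE eqxx /= inE => /eqP ->.
Qed.

Lemma fbar_comp f g k : inTP blk f -> inTP blk g ->
  fbar blk (rcomp f g) k = fbar blk g (fbar blk f k).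
Proof.
move=> Hf Hg; have [x <-] := blk_surj k.
have Hfg : inTP blk (rcomp f g).
  apply/forallP => i; have [y <-] := blk_surj i.
  apply/existsP; exists (blk (g (f y))); apply/forallP => z; apply/implyP.
  rewrite !inE => /eqP e; rewrite /rcomp !ffunE.
  by rewrite -(fbarE _ Hg) -(fbarE _ Hf) e (fbarE _ Hf) (fbarE _ Hg).
by rewrite (fbarE _ Hfg) (fbarE _ Hf) (fbarE _ Hg) /rcomp ffunE.
Qed.

Lemma card_pull (A B C : finType) (x0 : A) (a : A -> B) (b : A -> C) :
  (forall x y, a x = a y -> b x = b y) ->
  #|[set b x | x in A]| <= #|[set a x | x in A]|.
Proof.
move=> H.
pose F z := b (odflt x0 [pick x | a x == z]).
apply: (leq_trans _ (leq_imset_card F _)); apply: subset_leq_card.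
apply/subsetP => c /imsetP [x _ ->]; apply/imsetP; exists (a x).
  by apply: imset_f.
rewrite /F; case: pickP => [y /eqP /H -> //|/(_ x)]; by rewrite eqxx.
Qed.

Lemma inj_of_surj (f : 'I_n -> 'I_n) : (forall j, exists k, f k = j) -> injective f.
Proof.
move=> H; have : #|[set f x | x in 'I_n]| == #|'I_n|.
  rewrite eqn_leq leq_imset_card /= -cardsT; apply: subset_leq_card.
  apply/subsetP => j _.
  by have [k <-] := H j; apply: imset_f.
by move/imset_injP => Hi x y; apply: Hi.
Qed.

End Helpers.

Section Key.
Variables (T : finType) (n : nat) (blk : T -> 'I_n).
Hypothesis blk_surj : forall i : 'I_n, exists x : T, blk x = i.

Lemma bij_blocks f : inTP blk f -> inj_blk blk f -> injective (fbar blk f) ->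
  forall k, f @: block blk k = block blk (fbar blk f k).
Proof.
move=> Htp Hi Hinj.
have sub k : f @: block blk k \subset block blk (fbar blk f k).
  apply/subsetP => y /imsetP [x]; rewrite inE => /eqP <- ->.
  by rewrite inE (fbarE _ Htp).
have cardim k : #|f @: block blk k| = #|block blk k|.
  apply: card_in_imset => x y; rewrite !inE => /eqP e1 /eqP e2.
  by apply: Hi; rewrite e1 e2.
have le k : #|block blk k| <= #|block blk (fbar blk f k)|.
  by rewrite -cardim; apply: subset_leq_card.
have eqs : \sum_k #|block blk (fbar blk f k)| = \sum_k #|block blk k|.
  by rewrite [RHS](reindex_inj Hinj).
have z : \sum_k (#|block blk (fbar blk f k)| - #|block blk k|) == 0.
  by rewrite sumnB // eqs subnn.
move=> k; apply/eqP; rewrite eqEcard sub /= cardim.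
by move: z; rewrite sum_nat_eq0 => /forallP /(_ k) /=; rewrite subn_eq0.
Qed.

Variable U : {set {ffun T -> T}}.
Hypothesis hU : forall f, f \in U -> inTP blk f && ~~ inSigma blk f.
Let S := fun g => inSigma blk g || (g \in U).
Hypothesis hTP : forall f, sgen S f -> inTP blk f.

Lemma key h : sgen S h -> inj_blk blk h -> ~ injective (fbar blk h) ->
  exists u, exists pi : 'I_n -> 'I_n,
   [/\ u \in U, inj_blk blk u, injective pi,
       (forall x, #|block blk (pi x)| = #|block blk x|) &
       forall x y, fbar blk u (pi x) = fbar blk u (pi y) -> fbar blk h x = fbar blk h y].
Proof.
elim=> {h} [h|f g Sf IHf Sg IHg].
  case/orP => [Hs|Hu] Hi Hni.
    exfalso; apply: Hni; apply: inj_of_surj => j.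
    case/andP: Hs => Htp /forallP /(_ j) /existsP [x]; rewrite inE => /eqP <-.
    by exists (blk x); rewrite (fbarE _ Htp).
  by exists h, id; split.
move=> Hi Hni.
have Hf := hTP Sf; have Hg := hTP Sg.
have Hfi : inj_blk blk f.
  by move=> x y e e2; apply: Hi => //; rewrite /rcomp !ffunE e2.
have [Hfinj|Hfni] := boolP (injectiveb (fbar blk f)); last first.
  have [u [pi [uU ui pii psz ppb]]] := IHf Hfi (fun H => negP Hfni (introT (injectiveP _) H)).
  exists u, pi; split=> // x y /ppb e.
  by rewrite !fbar_comp // e.
move/(injectiveP _): Hfinj => Hfinj.
have bb := bij_blocks Hf Hfi Hfinj.
have Hgi : inj_blk blk g.
  move=> x y e e2.
  have [k Hk] : exists k, fbar blk f k = blk x.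
    have := f_invF Hfinj (blk x); by eexists; eauto.
  have : x \in f @: block blk k by rewrite bb inE Hk.
  have : y \in f @: block blk k by rewrite bb inE Hk e.
  move=> /imsetP [y' Hy' Ey] /imsetP [x' Hx' Ex]; subst x y.
  f_equal; apply: Hi.
    by move: Hx' Hy'; rewrite !inE => /eqP -> /eqP ->.
  by rewrite /rcomp !ffunE.
have Hgni : ~ injective (fbar blk g).
  move=> Hgi'; apply: Hni => x y; rewrite !fbar_comp // => /Hgi' /Hfinj //.
have [u [pi [uU ui pii psz ppb]]] := IHg Hgi Hgni.
exists u, (pi \o fbar blk f); split => //.
- exact: inj_comp.
- move=> x /=; rewrite psz.
  by rewrite -(bb x) card_in_imset // => a b; rewrite !inE => /eqP e1 /eqP e2;
     apply: Hfi; rewrite e1 e2.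
- by move=> x y /= /ppb; rewrite !fbar_comp.
Qed.

End Key.

Lemma exists_g (T : finType) (n : nat) (blk : T -> 'I_n) (i j : 'I_n) :
  i != j -> #|block blk i| <= #|block blk j| ->
  exists g, [/\ inTP blk g, inj_blk blk g &
     forall x, blk (g x) = if blk x == i then j else blk x].
Proof.
move=> ij le.
pose g := [ffun x => if blk x == i then nth x (enum (block blk j)) (index x (enum (block blk i))) else x].
have gj x : blk x = i -> blk (g x) = j.
  move=> e; rewrite /g ffunE e eqxx.
  suff : nth x (enum (block blk j)) (index x (enum (block blk i))) \in block blk j.
    by rewrite inE => /eqP.
  rewrite -mem_enum; apply: mem_nth; rewrite -cardE.
  apply: leq_trans le; rewrite cardE index_mem mem_enum inE e //.
have gE x : blk (g x) = if blk x == i then j else blk x.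
  case: eqP => [/gj //|ne]; by rewrite /g ffunE; case: eqP.
exists g; split => //.
- apply/forallP => k; apply/existsP; exists (if k == i then j else k).
  apply/forallP => x; apply/implyP; rewrite !inE => /eqP <-; by rewrite gE.
- move=> x y e; rewrite /g !ffunE -e; case: eqP => // ei.
  have xi : x \in enum (block blk i) by rewrite mem_enum inE ei.
  have yi : y \in enum (block blk i) by rewrite mem_enum inE -e ei.
  have lt z : z \in enum (block blk i) -> index z (enum (block blk i)) < size (enum (block blk j)).
    by move=> zi; rewrite -cardE; apply: leq_trans le; rewrite cardE index_mem.
  rewrite [in RHS](set_nth_default x) ?lt //.
  move/eqP; rewrite nth_uniq ?lt ?enum_uniq // => /eqP H.
  by rewrite -(nth_index x xi) H (nth_index x yi).
Qed.

Theorem lemma3p2 (T : finType) (n : nat) (blk : T -> 'I_n)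
    (U : {set {ffun T -> T}}) :
  0 < #|T| ->
  2 <= n ->
  (forall i : 'I_n, exists x : T, blk x = i) ->
  (forall i j : 'I_n, (i < j)%N -> #|block blk i| <= #|block blk j|) ->
  (forall f, f \in U -> inTP blk f && ~~ inSigma blk f) ->
  (forall f : {ffun T -> T},
      inTP blk f <-> sgen (fun g => inSigma blk g || (g \in U)) f) ->
  forall i j : 'I_n, i != j ->
    exists2 f, f \in U & inA blk f /\
      exists k l : 'I_n, [/\ k != l, fbar blk f k = fbar blk f l,
                          #|block blk i| = #|block blk k| &
                          #|block blk j| = #|block blk l| ].
Proof.
move=> hT hn hsurj hord hU hgen i j ij.
have hTP f : sgen (fun g => inSigma blk g || (g \in U)) f -> inTP blk f.
  by move=> H; apply/(hgen f).
wlog le : i j ij / #|block blk i| <= #|block blk j|.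
  move=> H; case: (leqP #|block blk i| #|block blk j|) => [l|l]; first exact: H.
  have := H j i; rewrite eq_sym => /(_ ij (ltnW l)) [f fU [fA [k [l' [kl e c1 c2]]]]].
  exists f => //; split => //; exists l', k; split => //; by rewrite eq_sym.
have [g [gTP gi gE]] := exists_g ij le.
have fbg k : fbar blk g k = if k == i then j else k.
  by have [x <-] := hsurj k; rewrite fbarE // gE.
have gS := proj1 (hgen g) gTP.
have gni : ~ injective (fbar blk g).
  move=> H; move: ij; rewrite (H i j) ?eqxx // !fbg eqxx.
  by case: eqP => // ->.
have [u [pi [uU ui pii psz ppb]]] := key hsurj hTP gS gi gni.
have /andP [uTP uNS] := hU u uU.
have ltc : #|[set fbar blk u k | k : 'I_n]| < n.
  suff : #|[set fbar blk u k | k : 'I_n]| < #|[set: 'I_n]| by rewrite cardsT card_ord.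
  apply: proper_card; rewrite properT.
  apply: contra uNS => /eqP E; rewrite /inSigma uTP /=.
  apply/forallP => j'; have : j' \in [set: 'I_n] by [].
  rewrite -E => /imsetP [k _ ->]; have [x <-] := hsurj k.
  by apply/existsP; exists x; rewrite inE fbarE.
have gec : n.-1 <= #|[set fbar blk u k | k : 'I_n]|.
  have := @card_pull _ _ _ i (fun x => fbar blk u (pi x)) (fbar blk g) ppb.
  move=> H1; apply: leq_trans (leq_trans H1 _).
    rewrite -{1}(card_ord n) -(cardsC1 i); apply: subset_leq_card.
    apply/subsetP => k; rewrite !inE => ki; apply/imsetP; exists k => //.
    by rewrite fbg (negbTE ki).
  apply: subset_leq_card; apply/subsetP => c /imsetP [k _ ->].
  by apply: imset_f.
exists u => //; split.
  apply/and3P; split => //.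
    apply/forallP => k; apply/forallP => x; apply/implyP => xk.
    apply/forallP => y; apply/implyP => yk; apply/implyP => /eqP e.
    apply/eqP; apply: ui e; move: xk yk; rewrite !inE => /eqP -> /eqP ->.
    done.
  rewrite eqn_leq gec andbT -ltnS (@ltn_predK 0) //.
  exact: leq_trans hn.
have [a [b [ab eab]]] : exists a b, a != b /\ fbar blk u a = fbar blk u b.
  case: (boolP [exists a, exists b, (a != b) && (fbar blk u a == fbar blk u b)]).
    by move=> /existsP [a /existsP [b /andP [ab /eqP e]]]; exists a, b.
  move=> Hn; exfalso.
  have inj : injective (fbar blk u).
    move=> a b e; apply/eqP; apply: contraNT Hn => ne.
    by apply/existsP; exists a; apply/existsP; exists b; rewrite ne e eqxx.
  by move: ltc; rewrite card_imset // card_ord ltnn.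
pose x := invF pii a; pose y := invF pii b.
have xa : pi x = a by rewrite /x f_invF.
have yb : pi y = b by rewrite /y f_invF.
have xy : x != y by apply: contraNneq ab => e; rewrite -xa -yb e.
have := ppb x y; rewrite xa yb => /(_ eab); rewrite !fbg.
case: (x =P i) => [xi|xi]; case: (y =P i) => [yi|yi].
- by move: xy; rewrite xi yi eqxx.
- move=> yj.
  exists a, b; split => //; [by rewrite -xa psz xi|by rewrite -yb psz yj].
- move=> xj.
  exists b, a; split; [by rewrite eq_sym|by []|by rewrite -yb psz yi|by rewrite -xa psz xj].
- by move=> e; move: xy; rewrite e eqxx.
Qed.
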